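(* In both the single-hop and the multihop version of Peg Duotaire, for all words $x,y\in\{0,1\}^*$ and every integer $m\ge 0$, the position $x\,0(01)^m00\,y$ is equivalent to the disjunctive sum of the positions $x0$ and $0y$ (the two parts can never interact); in particular \[ G\bigl(x\,0(01)^m00\,y\bigr) = G(x0)\oplus G(0y). \]
   Context: Peg Duotaire is an impartial two-player game played on the infinite line of sites indexed by $\mathbb{Z}$, each site holding a peg or being a hole, with finitely many pegs. A word $w\in\{0,1\}^*$ denotes the position in which $w$ is written on consecutive sites ($1$ = peg, $0$ = hole) and all other sites are holes. A hop: for a peg at site $i$, a peg at site $i+d$ and a hole at site $i+2d$ ($d=\pm1$), move the peg from $i$ to $i+2d$ and remove the peg at $i+d$. In the single-hop version, a move is a single hop; in the multihop version, a move is a sequence of one or more hops all performed by the same peg. Players alternate moves; a player unable to move loses. $G(w)$ denotes the nim-value (Grundy number) of the position $w$: the least nonnegative integer not among the nim-values of positions reachable in one move. $\oplus$ is bitwise exclusive-or of nonnegative integers (nim-sum); the nim-value of a disjunctive sum of games is the nim-sum of their nim-values. *)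

(* Defs.v *)
From mathcomp Require Import all_boot all_order all_algebra.
From Stdlib Require PeanoNat.
Set Implicit Arguments. Unset Strict Implicit. Unset Printing Implicit Defensive.
Import Order.TTheory GRing.Theory Num.Theory.
Local Open Scope ring_scope.

(* A position is the (finite) set of sites holding a peg, given as a list
   of integers (membership is what matters). *)
Definition position := seq int.

(* The word w written on sites 0, 1, ..., size w - 1 (true = peg). *)
Definition of_word (w : seq bool) : position :=
  [seq (i%:Z) | i <- iota 0 (size w) & nth false w i].

Definition hop (s : position) (a d : int) : option (int * position) :=
  if [&& a \in s, (a + d) \in s & (a + d *+ 2) \notin s]
  then Some (a + d *+ 2, (a + d *+ 2) :: [seq b <- s | (b != a) && (b != a + d)])
  else None.

Definition hops_from (s : position) (a : int) : seq (int * position) :=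
  pmap (hop s a) [:: 1; -1].

(* All positions reachable by a sequence of one or more hops all performed by
   the peg that starts at site a (fuel bounds the number of hops; each hop
   removes a peg, so fuel = number of pegs suffices). *)
Fixpoint multi_from (fuel : nat) (s : position) (a : int) : seq position :=
  match fuel with
  | O => [::]
  | fuel'.+1 =>
      flatten [seq p.2 :: multi_from fuel' p.2 p.1 | p <- hops_from s a]
  end.

(* Options of a position: single-hop version (multi = false) or multihop
   version (multi = true). *)
Definition moves (multi : bool) (s : position) : seq position :=
  if multi then flatten [seq multi_from (size s) s a | a <- undup s]
  else flatten [seq [seq p.2 | p <- hops_from s a] | a <- undup s].

Definition mex (l : seq nat) : nat :=
  find (fun k => k \notin l) (iota 0 (size l).+1).

(* Grundy values, by recursion on a fuel (every move decreases the number of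
   pegs, so fuel = size s + 1 is enough). *)
Fixpoint grundy_n (multi : bool) (n : nat) (s : position) : nat :=
  match n with
  | O => 0%N
  | n'.+1 => mex [seq grundy_n multi n' t | t <- moves multi s]
  end.

Definition G (multi : bool) (s : position) : nat := grundy_n multi (size s).+1 s.

Fixpoint grundy_sum_n (multi : bool) (n : nat) (s1 s2 : position) : nat :=
  match n with
  | O => 0%N
  | n'.+1 =>
      mex ([seq grundy_sum_n multi n' t s2 | t <- moves multi s1] ++
           [seq grundy_sum_n multi n' s1 t | t <- moves multi s2])
  end.

Definition G_sum (multi : bool) (s1 s2 : position) : nat :=
  grundy_sum_n multi (size s1 + size s2).+1 s1 s2.

Definition nimsum (a b : nat) : nat := PeanoNat.Nat.lxor a b.

Definition split_word (x y : seq bool) (m : nat) : seq bool :=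
  x ++ [:: false] ++ flatten (nseq m [:: false; true]) ++ [:: false; false] ++ y.

(* Main.v *)
Require Import Defs.
From mathcomp Require Import all_boot all_order all_algebra zify.
From Stdlib Require PeanoNat.
From Stdlib Require Import Lia.
Set Implicit Arguments. Unset Strict Implicit. Unset Printing Implicit Defensive.
Import Order.TTheory GRing.Theory Num.Theory.

Section PartGame.

Lemma bit_lt (k x y : nat) :
  (forall j, (k < j)%coq_nat -> PeanoNat.Nat.testbit x j = PeanoNat.Nat.testbit y j) ->
  PeanoNat.Nat.testbit x k = false -> PeanoNat.Nat.testbit y k = true -> (x < y)%coq_nat.
Proof.
elim: k x y => [|k IH] x y H Hx Hy.
- have Hd : PeanoNat.Nat.div2 x = PeanoNat.Nat.div2 y.
    apply: PeanoNat.Nat.bits_inj => j. rewrite !PeanoNat.Nat.testbit_div2. apply: H. lia.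
  have := PeanoNat.Nat.div2_odd x. have := PeanoNat.Nat.div2_odd y.
  rewrite -!PeanoNat.Nat.bit0_odd Hx Hy /= Hd. lia.
- have Hd : (PeanoNat.Nat.div2 x < PeanoNat.Nat.div2 y)%coq_nat.
    apply: IH; rewrite ?PeanoNat.Nat.testbit_div2 //. move=> j Hj; rewrite !PeanoNat.Nat.testbit_div2; apply: H; lia.
  have := PeanoNat.Nat.div2_odd x. have := PeanoNat.Nat.div2_odd y.
  case: (PeanoNat.Nat.odd x); case: (PeanoNat.Nat.odd y) => /=; lia.
Qed.

Lemma xor_lt_case (g1 g2 w : nat) :
  (w < PeanoNat.Nat.lxor g1 g2)%coq_nat ->
  (PeanoNat.Nat.lxor g1 (PeanoNat.Nat.lxor w (PeanoNat.Nat.lxor g1 g2)) < g1)%coq_nat \/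
  (PeanoNat.Nat.lxor g2 (PeanoNat.Nat.lxor w (PeanoNat.Nat.lxor g1 g2)) < g2)%coq_nat.
Proof.
set v := PeanoNat.Nat.lxor g1 g2 => Hwv.
set u := PeanoNat.Nat.lxor w v.
have u0 : u <> 0.
  move=> /PeanoNat.Nat.lxor_eq_0_iff E; lia.
set k := PeanoNat.Nat.log2 u.
have Hhi : forall j, (k < j)%coq_nat -> PeanoNat.Nat.testbit u j = false.
  by move=> j Hj; apply: PeanoNat.Nat.bits_above_log2.
have Hk : PeanoNat.Nat.testbit u k = true by apply: PeanoNat.Nat.bit_log2.
have Hagree : forall j, (k < j)%coq_nat -> PeanoNat.Nat.testbit w j = PeanoNat.Nat.testbit v j.
  move=> j Hj; have := Hhi j Hj; rewrite /u PeanoNat.Nat.lxor_spec.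
  by case: (PeanoNat.Nat.testbit w j); case: (PeanoNat.Nat.testbit v j).
have Hvk : PeanoNat.Nat.testbit v k = true.
  case E: (PeanoNat.Nat.testbit v k) => //.
  have Ew : PeanoNat.Nat.testbit w k = true.
    by move: Hk; rewrite /u PeanoNat.Nat.lxor_spec E; case: (PeanoNat.Nat.testbit w k).
  have : (v < w)%coq_nat.
    apply: (@bit_lt k) => // j Hj; symmetry; exact: Hagree.
  lia.
have gen : forall g, PeanoNat.Nat.testbit g k = true -> (PeanoNat.Nat.lxor g u < g)%coq_nat.
  move=> g Hg; apply: (@bit_lt k).
  - by move=> j Hj; rewrite PeanoNat.Nat.lxor_spec Hhi //; case: (PeanoNat.Nat.testbit g j).
  - by rewrite PeanoNat.Nat.lxor_spec Hg Hk.
  - exact Hg.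
move: Hvk; rewrite /v PeanoNat.Nat.lxor_spec.
case E1: (PeanoNat.Nat.testbit g1 k) => /= H.
- left; exact: gen.
- right; apply: gen; move: H; by case: (PeanoNat.Nat.testbit g2 k).
Qed.

Lemma mex_notin l : mex l \notin l.
Proof.
rewrite /mex.
have Hhas : has (fun k => k \notin l) (iota 0 (size l).+1).
  apply/negPn/negP; rewrite -all_predC => /allP Hall.
  have Hsub : {subset iota 0 (size l).+1 <= l}.
    by move=> k /Hall /= /negPn.
  have := uniq_leq_size (iota_uniq 0 (size l).+1) Hsub.
  by rewrite size_iota ltnn.
have := nth_find 0 Hhas.
have := Hhas; rewrite has_find size_iota => Hlt.
by rewrite nth_iota ?add0n.
Qed.

Lemma mex_below l k : k < mex l -> k \in l.
Proof.
rewrite /mex => Hk.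
have Hsz : find (fun k => k \notin l) (iota 0 (size l).+1) <= (size l).+1.
  by have := find_size (fun k => k \notin l) (iota 0 (size l).+1); rewrite size_iota.
have := before_find 0 Hk.
rewrite nth_iota ?add0n; last by apply: leq_trans Hk Hsz.
by move/negbFE.
Qed.

Lemma mex_unique l v : v \notin l -> (forall k, k < v -> k \in l) -> mex l = v.
Proof.
move=> Hv Hb.
case: (ltngtP (mex l) v) => // H.
- by have := mex_notin l; rewrite Hb.
- by move: Hv; rewrite mex_below.
Qed.

Lemma mex_eq l1 l2 : l1 =i l2 -> mex l1 = mex l2.
Proof.
move=> E; apply: mex_unique.
- by rewrite E mex_notin.
- by move=> k Hk; rewrite E; apply: mex_below.
Qed.

Local Open Scope ring_scope.

Lemma hopP s a d j t : hop s a d = Some (j, t) ->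
  [/\ a \in s, a + d \in s, a + d *+ 2 \notin s, j = a + d *+ 2 &
      t = j :: [seq b <- s | (b != a) && (b != a + d)]].
Proof.
rewrite /hop; case: ifP => // /and3P [H1 H2 H3] [<- <-]; by split.
Qed.

Lemma hop_some s a d : a \in s -> a + d \in s -> a + d *+ 2 \notin s ->
  hop s a d = Some (a + d *+ 2, (a + d *+ 2) :: [seq b <- s | (b != a) && (b != a + d)]).
Proof. by move=> H1 H2 H3; rewrite /hop H1 H2 H3. Qed.

Lemma mem_hop s a d j t p : hop s a d = Some (j, t) ->
  (p \in t) = (p == j) || [&& p != a, p != a + d & p \in s].
Proof.
move=> /hopP [_ _ _ _ ->]; by rewrite in_cons mem_filter andbA.
Qed.

Lemma filter1 (T : eqType) (P : pred T) x s : x \in s -> ~~ P x ->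
  (size (filter P s) < size s)%N.
Proof.
move=> Hx HP; rewrite size_filter.
have := count_predC P s.
have : (0 < count (predC P) s)%N by rewrite -has_count; apply/hasP; exists x.
lia.
Qed.

Lemma filter2 (T : eqType) (P : pred T) x y s : x \in s -> y \in s -> x != y ->
  ~~ P x -> ~~ P y -> (size (filter P s) + 2 <= size s)%N.
Proof.
elim: s => // z s IH; rewrite !inE => Hx Hy Hxy HPx HPy /=.
case: (eqVneq z x) => [Ezx|Hzx].
  subst z; have Hy' : y \in s.
    by move: Hy; case: eqVneq => //= E; move: Hxy; rewrite E eqxx.
  rewrite (negPf HPx); have := filter1 Hy' HPy; lia.
have Hx' : x \in s by move: Hx; rewrite (eq_sym x z) (negPf Hzx).
case: (eqVneq z y) => [Ezy|Hzy].
  subst z; rewrite (negPf HPy); have := filter1 Hx' HPx; lia.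
have Hy' : y \in s by move: Hy; rewrite (eq_sym y z) (negPf Hzy).
have := IH Hx' Hy' Hxy HPx HPy; case: (P z) => /=; lia.
Qed.

Lemma size_hop s a d j t : d != 0 -> hop s a d = Some (j, t) -> (size t < size s)%N.
Proof.
move=> d0 /hopP [H1 H2 _ _ ->] /=.
have Hne : a != a + d.
  by rewrite eq_sym -subr_eq0 addrC addKr (negPf d0).
have := filter2 (P := fun b => (b != a) && (b != a + d)) H1 H2 Hne.
rewrite /= eqxx /= ?andbF ?eqxx ?andbF. move=> /(_ isT isT); lia.
Qed.

Inductive chain : nat -> position -> int -> position -> Prop :=
| ch1 s a d j t : d \in [:: 1; -1] -> hop s a d = Some (j, t) -> chain 1 s a t
| chS k s a d j s' t : d \in [:: 1; -1] -> hop s a d = Some (j, s') ->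
    chain k s' j t -> chain k.+1 s a t.

Lemma d_neq0 d : d \in [:: 1; -1] -> d != 0 :> int.
Proof. by rewrite !inE => /orP [] /eqP ->. Qed.

Lemma chain_size k s a t : chain k s a t -> (size t + k <= size s)%N.
Proof.
elim=> {k s a t}.
- move=> s a d j t Hd Hh; have := size_hop (d_neq0 Hd) Hh; lia.
- move=> k s a d j s' t Hd Hh _ IH; have := size_hop (d_neq0 Hd) Hh; lia.
Qed.

Lemma chain_pos k s a t : chain k s a t -> (0 < k)%N.
Proof. by case. Qed.

Lemma chain_mem k s a t : chain k s a t -> a \in s.
Proof. by case=> [? ? d ? ? _ /hopP []|? ? ? d ? ? ? _ /hopP []]. Qed.

Lemma mem_hops_from s a p :
  (p \in hops_from s a) <-> exists2 d, d \in [:: 1; -1] & hop s a d = Some p.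
Proof.
rewrite /hops_from /=.
case E1: (hop s a 1) => [q1|]; case E2: (hop s a (-1)) => [q2|] /=;
  rewrite ?inE; split;
  try (case=> d; rewrite !inE => /orP [] /eqP -> ; rewrite ?E1 ?E2 // => -[->]; by rewrite ?eqxx ?orbT).
- case/orP => /eqP ->; [exists 1 | exists (-1)]; by rewrite ?inE ?eqxx ?orbT.
- move/eqP ->; exists 1; by rewrite ?inE ?eqxx.
- move/eqP ->; exists (-1); by rewrite ?inE ?eqxx ?orbT.
- by [].
Qed.

Lemma multi_fromP f s a t :
  t \in multi_from f s a <-> exists k, [/\ (0 < k)%N, (k <= f)%N & chain k s a t].
Proof.
elim: f s a t => [|f IH] s a t /=.
  split=> // -[k [H1 H2 _]]; lia.
split.
- case/flatten_mapP => -[j s'] /mem_hops_from [d Hd Hh]; rewrite inE => /orP [/eqP ->|].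
  + exists 1%N; split=> //; exact: ch1 Hd Hh.
  + case/IH => k [H1 H2 Hc]; exists k.+1; split=> //; exact: chS Hd Hh Hc.
- case=> k [H1 H2 Hc]; case: Hc H1 H2.
  + move=> s0 a0 d j t0 Hd Hh _ _; apply/flatten_mapP; exists (j, t0).
      by apply/mem_hops_from; exists d.
    by rewrite inE eqxx.
  + move=> k0 s0 a0 d j s' t0 Hd Hh Hc _ Hk; apply/flatten_mapP; exists (j, s').
      by apply/mem_hops_from; exists d.
    rewrite inE /=; apply/orP; right; apply/IH; exists k0; split=> //.
    exact: chain_pos Hc.
Qed.

Lemma movesP multi s t :
  t \in moves multi s <-> exists a k, chain k s a t /\ (multi || (k == 1%N)).
Proof.
rewrite /moves; case: multi; split.
- case/flatten_mapP => a _ /multi_fromP [k [_ _ Hc]]; by exists a, k.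
- case=> a [k [Hc _]]; apply/flatten_mapP; exists a; first by rewrite mem_undup (chain_mem Hc).
  apply/multi_fromP; exists k; split; first exact: chain_pos Hc.
  + have := chain_size Hc; lia.
  + exact Hc.
- case/flatten_mapP => a _ /mapP [[j t'] /mem_hops_from [d Hd Hh] ->] /=.
  exists a, 1%N; split=> //; exact: ch1 Hd Hh.
- case=> a [k [Hc /= /eqP Hk]]; subst k.
  apply/flatten_mapP; exists a; first by rewrite mem_undup (chain_mem Hc).
  inversion Hc; subst.
  + apply/mapP; exists (j, t) => //; apply/mem_hops_from; by exists d.
  + match goal with H : chain 0 _ _ _ |- _ => by have := chain_pos H end.
Qed.

Lemma moves_size multi s t : t \in moves multi s -> (size t < size s)%N.
Proof.
case/movesP => a [k [Hc _]]; have H := chain_size Hc; have P := chain_pos Hc.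
apply: leq_trans H; by rewrite -[X in (X < _)%N]addn0 ltn_add2l.
Qed.

Lemma xor_id1 a b w : PeanoNat.Nat.lxor (PeanoNat.Nat.lxor a (PeanoNat.Nat.lxor w (PeanoNat.Nat.lxor a b))) b = w.
Proof.
apply: PeanoNat.Nat.bits_inj => n; rewrite !PeanoNat.Nat.lxor_spec.
by case: (PeanoNat.Nat.testbit a n); case: (PeanoNat.Nat.testbit b n); case: (PeanoNat.Nat.testbit w n).
Qed.

Lemma xor_id2 a b w : PeanoNat.Nat.lxor a (PeanoNat.Nat.lxor b (PeanoNat.Nat.lxor w (PeanoNat.Nat.lxor a b))) = w.
Proof.
apply: PeanoNat.Nat.bits_inj => n; rewrite !PeanoNat.Nat.lxor_spec.
by case: (PeanoNat.Nat.testbit a n); case: (PeanoNat.Nat.testbit b n); case: (PeanoNat.Nat.testbit w n).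
Qed.

Lemma xor_cancel_r a b c : PeanoNat.Nat.lxor a c = PeanoNat.Nat.lxor b c -> a = b.
Proof.
move=> E; have := f_equal (fun z => PeanoNat.Nat.lxor z c) E.
by rewrite !PeanoNat.Nat.lxor_assoc PeanoNat.Nat.lxor_nilpotent !PeanoNat.Nat.lxor_0_r.
Qed.

Lemma grundy_fuel multi n1 n2 s : (size s < n1)%N -> (size s < n2)%N ->
  grundy_n multi n1 s = grundy_n multi n2 s.
Proof.
elim: n1 n2 s => [|n1 IH] [|n2] s //= H1 H2.
congr mex; apply/eq_in_map => t Ht; have Hs := moves_size Ht.
apply: IH; apply: leq_trans Hs _; by rewrite -ltnS.
Qed.

Lemma G_step multi s : G multi s = mex [seq G multi t | t <- moves multi s].
Proof.
rewrite [LHS]/G [LHS]/=; congr mex; apply/eq_in_map => t Ht; apply: grundy_fuel => //.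
exact: moves_size Ht.
Qed.

Lemma SG multi n s1 s2 : (size s1 + size s2 < n)%N ->
  grundy_sum_n multi n s1 s2 = PeanoNat.Nat.lxor (G multi s1) (G multi s2).
Proof.
elim: n s1 s2 => [|n IH] s1 s2 //= Hn.
have E1 : [seq grundy_sum_n multi n t s2 | t <- moves multi s1] =
          [seq PeanoNat.Nat.lxor (G multi t) (G multi s2) | t <- moves multi s1].
  apply/eq_in_map => t Ht; apply: IH; have H := moves_size Ht.
  rewrite ltnS in Hn; apply: leq_trans Hn; by rewrite ltn_add2r.
have E2 : [seq grundy_sum_n multi n s1 t | t <- moves multi s2] =
          [seq PeanoNat.Nat.lxor (G multi s1) (G multi t) | t <- moves multi s2].
  apply/eq_in_map => t Ht; apply: IH; have H := moves_size Ht.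
  rewrite ltnS in Hn; apply: leq_trans Hn; by rewrite ltn_add2l.
rewrite E1 E2; apply: mex_unique.
- rewrite mem_cat; apply/negP => /orP [] /mapP [t Ht E].
  + have E' := xor_cancel_r E.
    have := mex_notin [seq G multi t | t <- moves multi s1].
    by rewrite -G_step E' map_f.
  + rewrite PeanoNat.Nat.lxor_comm (PeanoNat.Nat.lxor_comm (G multi s1)) in E.
    have E' := xor_cancel_r E.
    have := mex_notin [seq G multi t | t <- moves multi s2].
    by rewrite -G_step E' map_f.
- move=> w /ssrnat.ltP Hw; rewrite mem_cat; apply/orP.
  case: (xor_lt_case Hw) => /ssrnat.ltP H.
  + left; move: H; rewrite [X in (_ < X)%N]G_step => /mex_below /mapP [t Ht Et].
    apply/mapP; exists t => //; by rewrite -Et xor_id1.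
  + right; move: H; rewrite [X in (_ < X)%N]G_step => /mex_below /mapP [t Ht Et].
    apply/mapP; exists t => //; by rewrite -Et xor_id2.
Qed.

End PartGame.

Section PartInv.

Fixpoint fib (n : nat) : nat :=
  match n with
  | 0 => 0
  | 1 => 1
  | (S k as m).+1 => fib m + fib k
  end.

Lemma fibSS n : fib n.+2 = fib n.+1 + fib n.
Proof. by []. Qed.

Lemma fib_mono m n : m <= n -> fib m <= fib n.
Proof.
move=> H; rewrite -(subnK H); elim: (n - m) => [|k IH] //.
apply: leq_trans IH _; rewrite addSn.
case: (k + m) => [|q] //; rewrite fibSS; exact: leq_addr.
Qed.

Lemma fib_sum N : \sum_(i < N) fib i + 1 = fib N.+1.
Proof.
elim: N => [|N IH]; first by rewrite big_ord0.
by rewrite big_ord_recr /= addnAC IH; case: N IH => [|N] IH //.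
Qed.

Lemma sum_sub_le (r1 r2 : seq nat) (f : nat -> nat) : uniq r1 -> uniq r2 ->
  {subset r1 <= r2} -> \sum_(i <- r1) f i <= \sum_(i <- r2) f i.
Proof.
move=> U1 U2 S.
rewrite [X in _ <= X](bigID (fun i => i \in r1)) /=.
have -> : \sum_(i <- r2 | i \in r1) f i = \sum_(i <- r1) f i.
  rewrite -big_filter; apply: perm_big; apply: uniq_perm.
  - exact: filter_uniq.
  - exact: U1.
  - by move=> i; rewrite mem_filter; case E: (i \in r1) => //=; rewrite S.
exact: leq_addr.
Qed.

Lemma sum_uniq_lt (r : seq nat) M : uniq r -> (forall i, i \in r -> i < M) ->
  \sum_(i <- r) fib i < fib M.+1.
Proof.
move=> U H; rewrite -fib_sum -(big_mkord xpredT) /index_iota subn0.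
rewrite addn1 ltnS; apply: sum_sub_le => //; first exact: iota_uniq.
by move=> i Hi; rewrite mem_iota add0n H.
Qed.

Local Open Scope ring_scope.

Definition dist (b p : int) : nat := absz (b + 1 - p)%R.
Definition DD (b lo : int) (n : nat) : nat := (absz (b - lo)%R + 1 + 2 * n)%N.
Definition W (b lo : int) (n : nat) (s : position) : nat :=
  (\sum_(p <- s) fib (DD b lo n - dist b p))%N.
Definition InvW (b lo : int) (n : nat) (s : position) : Prop :=
  [/\ uniq s, (size s <= n)%N,
      (forall p, p \in s -> (lo - 2%:Z * ((n - size s)%N)%:Z <= p) && (p <= b)) &
      (W b lo n s < fib (DD b lo n))%N].

Lemma InvW_eqm b lo n s s' : InvW b lo n s -> uniq s' -> s =i s' -> InvW b lo n s'.
Proof.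
move=> [U Sz Hb HW] U' E.
have P : perm_eq s s' by apply: uniq_perm.
have Es : size s = size s' by apply: perm_size.
split=> //; first by rewrite -Es.
- by move=> p; rewrite -E -Es; apply: Hb.
- by rewrite /W -(perm_big _ P).
Qed.

Lemma sum_hop2 (f : int -> nat) s a d j t : uniq s -> d != 0 -> hop s a d = Some (j, t) ->
  (\sum_(p <- s) f p = f a + f (a + d)%R + \sum_(p <- [seq b <- s | (b != a) && (b != a + d)%R]) f p)%N
  /\ (\sum_(p <- t) f p = f j + \sum_(p <- [seq b <- s | (b != a) && (b != a + d)%R]) f p)%N.
Proof.
move=> U d0 /hopP [Ha Had _ _ ->]; split; last by rewrite big_cons.
have Hne : a + d != a.
  by rewrite -subr_eq0 addrC addKr d0.
rewrite (bigD1_seq a) //= -big_filter (bigD1_seq (a + d)) /=; last first.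
- exact: filter_uniq.
- by rewrite mem_filter Hne.
rewrite -big_filter -filter_predI addnA; congr (_ + _)%N; apply: congr_big => //.
by apply: eq_filter => z /=; rewrite andbC.
Qed.

Lemma uniq_hop s a d j t : uniq s -> hop s a d = Some (j, t) -> uniq t.
Proof.
move=> U /hopP [_ _ Hj -> ->] /=; rewrite filter_uniq // andbT mem_filter.
by rewrite (negPf Hj) andbF.
Qed.

Lemma size_hop_eq s a d j t : uniq s -> d != 0 -> hop s a d = Some (j, t) ->
  (size t + 1 = size s)%N.
Proof.
move=> U d0 Hh; have [E1 E2] := sum_hop2 (fun _ => 1%N) U d0 Hh.
move: E1 E2; rewrite !sum1_size => -> ->; lia.
Qed.

Lemma InvW_hop b lo n s a d j t : InvW b lo n s -> d \in [:: 1; -1] ->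
  hop s a d = Some (j, t) -> InvW b lo n t.
Proof.
move=> [U Sz Hb HW] Hd Hh.
have d0 := d_neq0 Hd.
have [Ha Had Hj Ej Et] := hopP Hh.
have Ut := uniq_hop U Hh.
have Hsz := size_hop_eq U d0 Hh.
have Szt : (size t <= n)%N by apply: leq_trans Sz; rewrite -Hsz leq_addr.
set D := DD b lo n.
have [E1 E2] := sum_hop2 (fun p => fib (D - dist b p)) U d0 Hh.
move: (Hb a Ha) (Hb _ Had) => /andP [La Ua] /andP [Lad Uad].
have Ent : ((n - size t)%N = (n - size s).+1)%N.
  have aux : forall x y : nat, (x + 1 = y -> y <= n -> n - x = (n - y).+1)%N by move=> *; lia.
  exact: aux Hsz Sz.
have HD : (dist b a <= D)%N by rewrite /D /DD /dist; lia.
have Hmem : forall p, p \in t -> p = j \/ p \in s.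
  by move=> p; rewrite (mem_hop _ Hh) => /orP [/eqP ->|/and3P [_ _ ->]]; [left|right].
move: Hd; rewrite !inE => /orP [] /eqP Ed; subst d.
- have Ej' : j = a + 2 by rewrite Ej.
  have Hab : a + 2 <= b.
    have : a + 1 != b.
      apply/negP => /eqP Eab.
      have E3 : (D - dist b a = (D - 2))%N by rewrite /dist; lia.
      have HD2 : (2 <= D)%N by rewrite /D /DD; lia.
      have E4 : (D - dist b (a + 1) = (D - 2).+1)%N by rewrite /dist; lia.
      move: HW; rewrite /W -/D E1 E3 E4.
      have -> : fib D = (fib (D - 2).+1 + fib (D - 2))%N.
        by rewrite -fibSS; congr fib; lia.
      lia.
    lia.
  have E3 : (D - dist b (a + 1) = (D - dist b a).+1)%N by rewrite /dist /D /DD; lia.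
  have E4 : (D - dist b j = (D - dist b a).+2)%N by rewrite Ej' /dist /D /DD; lia.
  split=> //.
  + move=> p /Hmem [->|Hp]; first by rewrite Ej' Ent; apply/andP; split; lia.
    move: (Hb p Hp) => /andP [L1 L2]; apply/andP; split=> //; rewrite Ent; lia.
  + rewrite /W -/D E2 E4 fibSS; move: HW; rewrite /W -/D E1 E3; lia.
- have Ej' : j = a - 2 by rewrite Ej.
  have E4 : (D - dist b j <= D - dist b a)%N by rewrite Ej' /dist; lia.
  split=> //.
  + move=> p /Hmem [->|Hp]; first by rewrite Ej' Ent; apply/andP; split; lia.
    move: (Hb p Hp) => /andP [L1 L2]; apply/andP; split=> //; rewrite Ent; lia.
  + rewrite /W -/D E2; move: HW; rewrite /W -/D E1.
    have := fib_mono E4; lia.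
Qed.

Lemma InvW_init b lo s : uniq s -> (forall p, p \in s -> (lo <= p) && (p < b)) ->
  InvW b lo (size s) s.
Proof.
move=> U H; split=> //.
- move=> p /H /andP [H1 H2]; rewrite subnn /= mulr0 subr0 H1 /=; lia.
- rewrite /W; set D := DD b lo (size s).
  have HD : (1 <= D)%N by rewrite /D /DD; lia.
  have Hd : forall p, p \in s -> (2 <= dist b p <= D)%N.
    move=> p /H /andP [H1 H2]; rewrite /D /DD /dist; lia.
  rewrite -(big_map (fun p => D - dist b p)%N xpredT fib).
  have -> : D = (D.-1).+1 by lia.
  apply: sum_uniq_lt.
  + rewrite map_inj_in_uniq // => p q Hp Hq E.
    move: (Hd p Hp) (Hd q Hq) (H p Hp) (H q Hq) E; rewrite /dist; lia.
  + move=> i /mapP [p Hp ->]; move: (Hd p Hp); lia.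
Qed.

Lemma mem_neg (s : position) p : (p \in map -%R s) = (- p \in s).
Proof. by rewrite -{1}(opprK p) (mem_map (@oppr_inj _)). Qed.

Lemma hop_neg s a d j t : hop s a d = Some (j, t) ->
  exists t', hop (map -%R s) (- a) (- d) = Some (- j, t') /\ t' =i map -%R t.
Proof.
move=> Hh; have [Ha Had Hj Ej Et] := hopP Hh.
have E1 : - a \in map -%R s by rewrite mem_neg opprK.
have E2 : - a + - d \in map -%R s by rewrite mem_neg -opprD opprK.
have E3 : - a + (- d) *+ 2 \notin map -%R s by rewrite mem_neg mulNrn -opprD opprK.
have Ej2 : - j = - a + (- d) *+ 2 by rewrite Ej opprD mulNrn.
rewrite (hop_some E1 E2 E3) Ej2; eexists; split; first reflexivity.
move=> p; rewrite mem_neg (mem_hop _ Hh) in_cons mem_filter mem_neg.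
rewrite -Ej2 -opprD !eqr_oppLR. by rewrite andbA.
Qed.

Lemma InvW_hop_neg lo n s a d j t : InvW 0 lo n (map -%R s) -> d \in [:: 1; -1] ->
  hop s a d = Some (j, t) -> InvW 0 lo n (map -%R t).
Proof.
move=> Hi Hd Hh; have [t' [H1 H2]] := hop_neg Hh.
have Hd' : - d \in [:: 1; -1].
  by move: Hd; rewrite !inE => /orP [] /eqP ->; rewrite ?opprK eqxx ?orbT.
have Hi' := InvW_hop Hi Hd' H1.
apply: InvW_eqm Hi' _ H2.
case: Hi => U _ _ _.
rewrite (map_inj_uniq (@oppr_inj _)); rewrite (map_inj_uniq (@oppr_inj _)) in U.
exact: uniq_hop U Hh.
Qed.

End PartInv.

Section PartComb.
Local Open Scope ring_scope.

Lemma dP d : d \in [:: 1; -1] -> d = 1 \/ d = -1 :> int.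
Proof. by rewrite !inE => /orP [] /eqP ->; [left|right]. Qed.

Lemma hop_ex s a d : a \in s -> a + d \in s -> a + (d + d) \notin s ->
  exists t, hop s a d = Some (a + (d + d), t).
Proof. move=> H1 H2 H3; rewrite (hop_some H1 H2) -?mulr2n //; eexists; by rewrite mulr2n. Qed.

Lemma hopP' s a d j t : hop s a d = Some (j, t) ->
  [/\ a \in s, a + d \in s, a + (d + d) \notin s & j = a + (d + d)].
Proof. by move/hopP => [H1 H2 H3 H4 _]; rewrite -mulr2n. Qed.

Lemma eq_shift (x y x' y' : int) : x - y = x' - y' -> (x == y) = (x' == y').
Proof. by move=> E; rewrite -subr_eq0 E subr_eq0. Qed.

Section Comb.
Variables (b : int) (m : nat) (lo2 : int) (n1 n2 : nat).

Definition ee := b + 2%:Z * m%:Z + 2.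
Definition mid (p : int) : bool :=
  [&& b + 2 <= p, p <= b + 2%:Z * m%:Z & ~~ odd (absz (p - b)%R)].

Lemma midP p : mid p -> exists k : nat, [/\ b + 2 <= p, p <= b + 2%:Z * m%:Z & p = b + 2%:Z * k%:Z].
Proof.
case/and3P => H1 H2 H3.
have E : absz (p - b)%R = (2 * (absz (p - b)%R)./2)%N.
  by rewrite -{1}(odd_double_half (absz (p - b)%R)) (negPf H3) add0n -mul2n.
exists (absz (p - b)%R)./2; split=> //; lia.
Qed.

Definition Rel (s s1 s2 : position) : Prop :=
  [/\ InvW b 0 n1 s1, InvW 0 lo2 n2 (map -%R s2) &
      forall p, (p \in s) = [|| p \in s1, mid p | (p - ee) \in s2]].

Lemma relL s s1 s2 p : Rel s s1 s2 -> p \in s1 -> p <= b.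
Proof. by case=> [[_ _ H _] _ _] /H /andP []. Qed.

Lemma relR s s1 s2 q : Rel s s1 s2 -> q \in s2 -> 0 <= q.
Proof.
case=> _ [_ _ H _] _ Hq.
have : - q \in map -%R s2 by rewrite mem_neg opprK.
move/H => /andP [_]; lia.
Qed.

Lemma relM s s1 s2 p : Rel s s1 s2 -> mid p -> (p \in s1 = false) /\ ((p - ee) \in s2 = false).
Proof.
move=> R /midP [k [H1 H2 _]]; split; apply/negP => H.
- have := relL R H; lia.
- have := relR R H; unfold ee in *; lia.
Qed.


Lemma neg_ge0 lo n s q : InvW 0 lo n (map -%R s) -> q \in s -> 0 <= q.
Proof.
case=> _ _ H _ Hq.
have : - q \in map -%R s by rewrite mem_neg opprK.
move/H => /andP [_]; lia.
Qed.

Lemma relL_after s s1 s2 a d j t t1 : Rel s s1 s2 -> a \in s1 -> a + d \in s1 ->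
  hop s a d = Some (j, t) -> hop s1 a d = Some (j, t1) -> InvW b 0 n1 t1 -> Rel t t1 s2.
Proof.
move=> R Ha Had Hh Hh1 Hi; case: (R) => _ HR HM; split=> // p.
rewrite (mem_hop _ Hh) (mem_hop _ Hh1) HM.
have La := relL R Ha; have Lad := relL R Had.
case Hx: (mid p || (p - ee \in s2)).
- have [Hpa Hpad] : p != a /\ p != a + d.
    move: Hx => /orP [/midP [k [H1 _ _]] | /(relR R) H]; split; apply/eqP => E;
      unfold ee in *; lia.
  rewrite Hpa Hpad /=; move: Hx; case: (mid p); case: (p - ee \in s2); by rewrite !orbT.
- move: Hx; case: (mid p); case: (p - ee \in s2) => //= _; by rewrite !orbF.
Qed.

Lemma relR_after s s1 s2 a d j t t2 : Rel s s1 s2 -> (a - ee) \in s2 -> d \in [:: 1; -1] ->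
  hop s a d = Some (j, t) -> hop s2 (a - ee) d = Some (j - ee, t2) ->
  InvW 0 lo2 n2 (map -%R t2) -> Rel t s1 t2.
Proof.
move=> R Ha Hd Hh Hh2 Hi; case: (R) => HL _ HM; split=> // p.
rewrite (mem_hop _ Hh) (mem_hop _ Hh2) HM.
have Ra := relR R Ha.
rewrite (@eq_shift (p - ee) (j - ee) p j); last by rewrite opprB addrA subrK addrC.
rewrite (@eq_shift (p - ee) (a - ee) p a); last by rewrite opprB addrA subrK addrC.
rewrite (@eq_shift (p - ee) (a - ee + d) p (a + d)); last by unfold ee in *; lia.
case Hx: ((p \in s1) || mid p).
- have [Hpa Hpad] : p != a /\ p != a + d.
    move: Hx => /orP [/(relL R) H | /midP [k [_ H _]]]; split; apply/eqP => E;
      case: (dP Hd) => Ed; unfold ee in *; lia.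
  rewrite Hpa Hpad /=; move: Hx; case: (p \in s1); case: (mid p); by rewrite ?orbT.
- move: Hx; case: (p \in s1); case: (mid p) => //= _.
Qed.

Lemma hopL s s1 s2 a d j t : Rel s s1 s2 -> d \in [:: 1; -1] -> a \in s1 ->
  hop s a d = Some (j, t) -> exists t1, hop s1 a d = Some (j, t1) /\ Rel t t1 s2.
Proof.
move=> R Hd Ha Hh; have [H1 H2 H3 Ej] := hopP' Hh; case: (R) => HL HR HM.
have La := relL R Ha.
have Had : a + d \in s1.
  move: H2; rewrite HM; case/or3P => // [/midP [k [? _ _]] | /(relR R)];
    case: (dP Hd) => Ed; unfold ee in *; lia.
have Hj1 : a + (d + d) \notin s1 by move: H3; rewrite HM; apply: contra => ->.
have [t1 Hh1] := hop_ex Ha Had Hj1.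
rewrite -Ej in Hh1; exists t1; split=> //.
apply: (relL_after R Ha Had Hh Hh1).
exact: InvW_hop HL Hd Hh1.
Qed.

Lemma hopL' s s1 s2 a d j t1 : Rel s s1 s2 -> d \in [:: 1; -1] ->
  hop s1 a d = Some (j, t1) -> exists t, hop s a d = Some (j, t) /\ Rel t t1 s2.
Proof.
move=> R Hd Hh1; have [H1 H2 H3 Ej] := hopP' Hh1; case: (R) => HL HR HM.
have Hi := InvW_hop HL Hd Hh1.
have Hjt : j \in t1 by rewrite (mem_hop _ Hh1) eqxx.
have Lj : j <= b by case: Hi => _ _ Hb _; move: (Hb j Hjt) => /andP [_ ->].
have Ha : a \in s by rewrite HM H1.
have Had : a + d \in s by rewrite HM H2.
have Hj : a + (d + d) \notin s.
  have H3' : j \notin s1 by rewrite Ej.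
  rewrite HM -Ej (negbTE H3') /=.
  apply/negP => /orP [/midP [k [? _ _]] | /(relR R)]; unfold ee in *; lia.
have [t Hh] := hop_ex Ha Had Hj.
rewrite -Ej in Hh; exists t; split=> //.
exact: relL_after R H1 H2 Hh Hh1 Hi.
Qed.

Lemma hopR s s1 s2 a d j t : Rel s s1 s2 -> d \in [:: 1; -1] -> (a - ee) \in s2 ->
  hop s a d = Some (j, t) -> exists t2, hop s2 (a - ee) d = Some (j - ee, t2) /\ Rel t s1 t2.
Proof.
move=> R Hd Ha Hh; have [H1 H2 H3 Ej] := hopP' Hh; case: (R) => HL HR HM.
have Ra := relR R Ha.
have Had : a - ee + d \in s2.
  move: H2; rewrite HM; case/or3P => [/(relL R) | /midP [k [_ ? _]] | ];
    try (case: (dP Hd) => Ed; unfold ee in *; lia).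
  by rewrite addrAC.
have Hj2 : a - ee + (d + d) \notin s2.
  by move: H3; rewrite HM addrAC; apply: contra => ->; rewrite !orbT.
have [t2 Hh2] := hop_ex Ha Had Hj2.
have Ej2 : a - ee + (d + d) = j - ee by rewrite Ej addrAC.
rewrite Ej2 in Hh2; exists t2; split=> //.
apply: (relR_after R Ha Hd Hh Hh2).
exact: InvW_hop_neg HR Hd Hh2.
Qed.

Lemma hopR' s s1 s2 a2 d j2 t2 : Rel s s1 s2 -> d \in [:: 1; -1] ->
  hop s2 a2 d = Some (j2, t2) -> exists t, hop s (a2 + ee) d = Some (j2 + ee, t) /\ Rel t s1 t2.
Proof.
move=> R Hd Hh2; have [H1 H2 H3 Ej] := hopP' Hh2; case: (R) => HL HR HM.
have Hi := InvW_hop_neg HR Hd Hh2.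
have Hjt : j2 \in t2 by rewrite (mem_hop _ Hh2) eqxx.
have Lj := neg_ge0 Hi Hjt.
have Ha : a2 + ee \in s by rewrite HM addrK H1 !orbT.
have Had : a2 + ee + d \in s by rewrite HM addrAC addrK H2 !orbT.
have Hj : a2 + ee + (d + d) \notin s.
  rewrite HM addrAC addrK (negbTE H3) orbF; apply/negP => /orP [/(relL R) | /midP [k [_ ? _]]];
    unfold ee in *; lia.
have [t Hh] := hop_ex Ha Had Hj.
have Ej2 : a2 + ee + (d + d) = j2 + ee by rewrite Ej addrAC.
rewrite Ej2 in Hh; exists t; split=> //.
apply: (relR_after (a := a2 + ee) R _ Hd Hh _ Hi); first by rewrite addrK.
by rewrite !addrK.
Qed.

Lemma hopM s s1 s2 a d : Rel s s1 s2 -> mid a -> d \in [:: 1; -1] -> hop s a d = None.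
Proof.
move=> R Ha Hd; case E: (hop s a d) => [[j t]|] //.
have [_ H2 _ _] := hopP' E; case: (R) => _ _ HM.
move: H2; rewrite HM; have [k [A1 A2 A3]] := midP Ha.
case/or3P => [/(relL R) | /midP [k' [_ _ ?]] | /(relR R)]; case: (dP Hd) => Ed; unfold ee in *; lia.
Qed.


Lemma chainL k s s1 s2 a t : Rel s s1 s2 -> a \in s1 -> chain k s a t ->
  exists t1, chain k s1 a t1 /\ Rel t t1 s2.
Proof.
move=> R Ha Hc; elim: Hc s1 R Ha => {k s a t}.
- move=> s a d j t Hd Hh s1 R Ha; have [t1 [Hh1 R1]] := hopL R Hd Ha Hh.
  by exists t1; split=> //; apply: ch1 Hd Hh1.
- move=> k s a d j s' t Hd Hh Hc IH s1 R Ha; have [t1 [Hh1 R1]] := hopL R Hd Ha Hh.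
  have Hj : j \in t1 by rewrite (mem_hop _ Hh1) eqxx.
  have [t1' [Hc1 R2]] := IH _ R1 Hj.
  by exists t1'; split=> //; apply: chS Hd Hh1 Hc1.
Qed.

Lemma chainL' k s s1 s2 a t1 : chain k s1 a t1 -> Rel s s1 s2 ->
  exists t, chain k s a t /\ Rel t t1 s2.
Proof.
move=> Hc; elim: Hc s => {k s1 a t1}.
- move=> s1 a d j t1 Hd Hh1 s R; have [t [Hh R1]] := hopL' R Hd Hh1.
  by exists t; split=> //; apply: ch1 Hd Hh.
- move=> k s1 a d j s1' t1 Hd Hh1 Hc IH s R; have [t [Hh R1]] := hopL' R Hd Hh1.
  have [t' [Hc' R2]] := IH _ R1.
  by exists t'; split=> //; apply: chS Hd Hh Hc'.
Qed.

Lemma chainR k s s1 s2 a t : Rel s s1 s2 -> (a - ee) \in s2 -> chain k s a t ->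
  exists t2, chain k s2 (a - ee) t2 /\ Rel t s1 t2.
Proof.
move=> R Ha Hc; elim: Hc s2 R Ha => {k s a t}.
- move=> s a d j t Hd Hh s2 R Ha; have [t2 [Hh2 R1]] := hopR R Hd Ha Hh.
  by exists t2; split=> //; apply: ch1 Hd Hh2.
- move=> k s a d j s' t Hd Hh Hc IH s2 R Ha; have [t2 [Hh2 R1]] := hopR R Hd Ha Hh.
  have Hj : j - ee \in t2 by rewrite (mem_hop _ Hh2) eqxx.
  have [t2' [Hc2 R2]] := IH _ R1 Hj.
  by exists t2'; split=> //; apply: chS Hd Hh2 Hc2.
Qed.

Lemma chainR' k s s1 s2 a2 t2 : chain k s2 a2 t2 -> Rel s s1 s2 ->
  exists t, chain k s (a2 + ee) t /\ Rel t s1 t2.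
Proof.
move=> Hc; elim: Hc s => {k s2 a2 t2}.
- move=> s2 a d j t2 Hd Hh2 s R; have [t [Hh R1]] := hopR' R Hd Hh2.
  by exists t; split=> //; apply: ch1 Hd Hh.
- move=> k s2 a d j s2' t2 Hd Hh2 Hc IH s R; have [t [Hh R1]] := hopR' R Hd Hh2.
  have [t' [Hc' R2]] := IH _ R1.
  by exists t'; split=> //; apply: chS Hd Hh Hc'.
Qed.

Lemma chainM k s s1 s2 a t : Rel s s1 s2 -> mid a -> chain k s a t -> False.
Proof.
move=> R Ha Hc; case: Hc R Ha => [? ? d ? ? Hd Hh | ? ? ? d ? ? ? Hd Hh _] R Ha;
  by rewrite (hopM R Ha Hd) in Hh.
Qed.

Lemma moves_fwd multi s s1 s2 t : Rel s s1 s2 -> t \in moves multi s ->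
  (exists2 t1, t1 \in moves multi s1 & Rel t t1 s2) \/
  (exists2 t2, t2 \in moves multi s2 & Rel t s1 t2).
Proof.
move=> R /movesP [a [k [Hc Hk]]].
have Ha := chain_mem Hc; case: (R) => _ _ HM.
move: Ha; rewrite HM => /or3P [H|H|H].
- left; have [t1 [Hc1 R1]] := chainL R H Hc; exists t1 => //.
  by apply/movesP; exists a, k.
- by case: (chainM R H Hc).
- right; have [t2 [Hc2 R2]] := chainR R H Hc; exists t2 => //.
  by apply/movesP; exists (a - ee), k.
Qed.

Lemma moves_bwdL multi s s1 s2 t1 : Rel s s1 s2 -> t1 \in moves multi s1 ->
  exists2 t, t \in moves multi s & Rel t t1 s2.
Proof.
move=> R /movesP [a [k [Hc Hk]]].
have [t [Hc' R1]] := chainL' Hc R; exists t => //.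
by apply/movesP; exists a, k.
Qed.

Lemma moves_bwdR multi s s1 s2 t2 : Rel s s1 s2 -> t2 \in moves multi s2 ->
  exists2 t, t \in moves multi s & Rel t s1 t2.
Proof.
move=> R /movesP [a [k [Hc Hk]]].
have [t [Hc' R1]] := chainR' Hc R; exists t => //.
by apply/movesP; exists (a + ee), k.
Qed.

Lemma bisim multi n s s1 s2 : Rel s s1 s2 -> grundy_n multi n s = grundy_sum_n multi n s1 s2.
Proof.
elim: n s s1 s2 => [|n IH] s s1 s2 R //=.
apply: mex_eq => v; apply/idP/idP.
- case/mapP => t Ht ->; rewrite mem_cat; apply/orP.
  case: (moves_fwd R Ht) => [[t1 Ht1 R1]|[t2 Ht2 R2]]; [left|right]; apply/mapP.
  + by exists t1 => //=; apply: IH.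
  + by exists t2 => //=; apply: IH.
- rewrite mem_cat => /orP [] /mapP [u Hu ->].
  + have [t Ht R1] := moves_bwdL R Hu; apply/mapP; exists t => //; symmetry; exact: IH.
  + have [t Ht R1] := moves_bwdR R Hu; apply/mapP; exists t => //; symmetry; exact: IH.
Qed.

End Comb.

End PartComb.

Section PartMain.
Local Open Scope ring_scope.

Lemma Posz_inj : injective Posz. Proof. by move=> ? ? []. Qed.

Lemma mem_of_word w p :
  (p \in of_word w) = (0 <= p) && ((absz p < size w)%N && nth false w (absz p)).
Proof.
case: p => [i|i] /=.
- by rewrite /of_word (mem_map Posz_inj) mem_filter mem_iota add0n /= andbC.
- apply/negP => /mapP [k _] //.
Qed.

Lemma uniq_of_word w : uniq (of_word w).
Proof. by rewrite /of_word (map_inj_uniq Posz_inj) filter_uniq // iota_uniq. Qed.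

Lemma nth_flat m j : (j < 2 * m)%N ->
  nth false (flatten (nseq m [:: false; true])) j = odd j.
Proof.
elim: m j => [|m IH] j; first by rewrite muln0 ltn0.
case: j => [|[|j]] Hj; try by [].
rewrite /= IH; first by rewrite negbK.
lia.
Qed.

Lemma size_split x y m : size (split_word x y m) = (size x + 1 + 2 * m + 2 + size y)%N.
Proof.
rewrite /split_word !size_cat /= size_flatten /shape map_nseq /= sumn_nseq.
lia.
Qed.

Lemma size_F m : size (flatten (nseq m [:: false; true])) = (2 * m)%N.
Proof. rewrite size_flatten /shape map_nseq /= sumn_nseq; lia. Qed.

Lemma nth_split x y m i : nth false (split_word x y m) i =
  if (i < size x)%N then nth false x i
  else if (i <= size x + 2 * m)%N then odd (i - size x - 1)
  else if (i <= size x + 2 * m + 2)%N then false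
  else nth false y (i - size x - 2 * m - 3).
Proof.
rewrite /split_word nth_cat; case: ltnP => H1 //.
rewrite cat1s; case E: (i - size x)%N => [|k] /=.
  by rewrite ifT; lia.
rewrite nth_cat size_F; case: ltnP => H2.
  by rewrite nth_flat // ifT; [congr odd; lia | lia].
rewrite ifF; last lia.
case E2: (k - 2 * m)%N => [|[|k2]] /=.
- by rewrite ifT //; lia.
- by rewrite ifT //; lia.
- rewrite ifF; last lia.
  congr nth; lia.
Qed.

Lemma init_rel x y m :
  Rel (size x)%:Z m (- (size y)%:Z) (size (of_word (x ++ [:: false]))) (size (of_word (false :: y)))
      (of_word (split_word x y m)) (of_word (x ++ [:: false])) (of_word (false :: y)).
Proof.
split.
- apply: InvW_init; first exact: uniq_of_word.
  move=> p; rewrite mem_of_word size_cat /= nth_cat.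
  case/andP => H0 /andP [H1]; case: ltnP => H2 /=.
  + move=> _; apply/andP; split => //; lia.
  + have -> : (absz p - size x = 0)%N by lia.
    by [].
- have := @InvW_init 0 (- (size y)%:Z) (map -%R (of_word (false :: y))).
  rewrite size_map; apply.
  + rewrite (map_inj_uniq (@oppr_inj _)); exact: uniq_of_word.
  + move=> p; rewrite mem_neg mem_of_word /=.
    case/andP => H0 /andP [H1]; case E: (absz (- p)) => [|k] //= _.
    apply/andP; split; lia.
- move=> p; rewrite !mem_of_word /ee /mid.
  case: p => [i|i]; last first.
    have F1 : (0 <= Negz i) = false by apply/negbTE; lia.
    have F2 : (Posz (size x) + 2 <= Negz i) = false by apply/negbTE; lia.
    have F3 : (0 <= Negz i - (Posz (size x) + 2%:Z * Posz m + 2)) = false by apply/negbTE; lia.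
    by rewrite F1 F2 F3.
  rewrite size_split nth_split size_cat /= nth_cat.
  case: (ltnP i (size x)) => H1.
  + case: (nth false x i); lia.
  case: (leqP i (size x + 2 * m)) => H2.
  + have B : nth false [:: false] (i - size x) = false by case: (i - size x)%N => [|[|]].
    rewrite B andbF /=.
    have A : absz (Posz i - Posz (size x))%R = (i - size x)%N by lia.
    rewrite A.
    case: (eqVneq i (size x)) => [Ei|Hne].
    * rewrite Ei subnn /=; lia.
    * have -> : odd (i - size x) = ~~ odd (i - size x - 1).
        have E : (i - size x = (i - size x - 1).+1)%N by lia.
        by rewrite {1}E.
      rewrite negbK; set z := odd _; set w := nth false (false :: y) _; lia.
  + case: (ltngtP i (size x + 2 * m + 2)) => H3.
    * set z := nth false (false :: y) _; lia.
    * have A : absz (Posz i - (Posz (size x) + 2%:Z * Posz m + 2))%R = ((i - size x - 2 * m - 3).+1)%N by lia.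
      rewrite A /=; case: (nth false y (i - size x - 2 * m - 3)); lia.
    * subst i.
      have A : absz (Posz (size x + 2 * m + 2) - (Posz (size x) + 2%:Z * Posz m + 2))%R = 0%N by lia.
      rewrite A /=; lia.
Qed.



End PartMain.

Theorem lemma1 (multi : bool) (x y : seq bool) (m : nat) :
  G multi (of_word (split_word x y m))
    = G_sum multi (of_word (x ++ [:: false])) (of_word (false :: y))
  /\
  G multi (of_word (split_word x y m))
    = nimsum (G multi (of_word (x ++ [:: false]))) (G multi (of_word (false :: y))).
Proof.
have Rl := init_rel x y m.
set S := of_word (split_word x y m) in Rl *.
set L := of_word (x ++ [:: false]) in Rl *.
set R := of_word (false :: y) in Rl *.
have H : G multi S = PeanoNat.Nat.lxor (G multi L) (G multi R).
  set N := (size S + size L + size R).+1.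
  transitivity (grundy_n multi N S).
    rewrite /G; apply: grundy_fuel; rewrite /N; lia.
  rewrite (bisim multi N Rl); apply: SG; rewrite /N; lia.
split; last by rewrite H.
by rewrite H /G_sum SG.
Qed.
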